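(* Let $D$ be an oriented virtual singular link diagram, $S$ a state of $D$, and $S'$ the state of $D$ obtained from $S$ by changing the resolution at exactly one classical or singular crossing of $D$. Write $\max_A(\overline{R}(S))=2a(S)+4b(S)+2(\alpha(S)+\|S\|)+4\beta(S)$. (1) If $\|S'\|\neq\|S\|$, then $i(S')=i(S)$ and $\max_A(\overline{R}(S'))\equiv\max_A(\overline{R}(S))\pmod 4$. (2) If $\|S'\|=\|S\|$, then $i(S')=-i(S)$ and $\max_A(\overline{R}(S'))\equiv\max_A(\overline{R}(S))+2\pmod 4$.
   Context: An oriented virtual singular link diagram is a generic immersion of finitely many oriented circles into $\mathbb{R}^2$ with finitely many transverse double points, each decorated as a classical crossing (with over/under information and the usual sign $\pm1$), a singular crossing, or a virtual crossing. At a classical or singular crossing, the oriented resolution replaces it by two disjoint arcs respecting orientation; the disoriented resolution replaces it by one arc joining the two incoming ends with a sink bivalent vertex (both adjacent edges oriented toward it) and one arc joining the two outgoing ends with a source bivalent vertex. Virtual crossings are kept. A state $S$ of $D$ is a choice of resolution at every classical and singular crossing; it is a collection of immersed closed curves (all intersections virtual) with bivalent vertices, edge orientations alternating. $\|S\|$ = number of closed curves of $S$; $a(S)$ = #(negative classical crossings with oriented resolution) $-$ #(positive classical crossings with oriented resolution); $b(S)$ the same for disoriented resolutions; $\alpha(S),\beta(S)$ = numbers of singular crossings with oriented, resp. disoriented, resolution. $\overline{R}(S)=A^{2a(S)+4b(S)}(-A^2-A^{-2})^{\alpha(S)+\|S\|}(-A^4-A^{-4})^{\beta(S)}h^{\frac{1-i(S)}{2}}$,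 where the parity $i(S)\in\{\pm1\}$ is defined as follows: an edge of $S$ is an arc between consecutive bivalent vertices (a closed curve without vertices is one edge); a weight map is $\tau:E(S)\to\{\pm1\}$ with different values on edges sharing a vertex; $i(S)=\prod_v\tau(e_v)\tau(e_v')$ over all virtual crossings $v$ of $S$, with $e_v,e_v'$ the edges meeting at $v$ (possibly equal); this is independent of $\tau$. *)

(* Defs.v *)
From HB Require Import structures.
From mathcomp Require Import all_boot all_order all_algebra.
Set Implicit Arguments. Unset Strict Implicit. Unset Printing Implicit Defensive.
Import Order.TTheory GRing.Theory Num.Theory.

(* Crossings.  Every double point c of the immersion has two strands, numbered *)
(* 1 (false) and 2 (true), each passing through c with an incoming and an     *)
(* outgoing half-edge.  Strand numbering convention: going counterclockwise   *)
(* around c the four half-edges are  in1, in2, out1, out2  (any transverse    *)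
(* crossing of two oriented strands admits exactly one such labelling).       *)
(* A classical crossing records whether strand 1 is the over-strand; with the *)
(* convention above, strand 1 over  <=>  the crossing is positive.            *)
Inductive ckind := Classical of bool | Singular | Virtual.

Definition is_virtual k := if k is Virtual then true else false.
Definition is_singular k := if k is Singular then true else false.
Definition is_pos k := if k is Classical o then o else false.
Definition is_neg k := if k is Classical o then ~~ o else false.

(*  - link c s : the (crossing, strand) whose incoming half-edge is reached by *)
(*    following the diagram from the outgoing half-edge of strand s at c;     *)
(*    this is a bijection on C * bool (injective on a finite type);           *)
(*  - ncirc : number of closed components with no double points.             *)
Record diagram (C : finType) := Diagram {
  kind : C -> ckind;
  link : C -> bool -> C * bool;
  link_inj : injective (fun p : C * bool => link p.1 p.2);
  ncirc : nat }.

(* Half-edges (darts): (c, s, o) = strand s at crossing c, outgoing iff o.   *)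
Definition dart (C : finType) := (C * bool * bool)%type.

Section Defs.
Variables (C : finType) (D : diagram C).

Definition ext_rel (d e : dart C) : bool :=
  let: (c, s, o) := d in let: (c', s', o') := e in
  (o && ~~ o' && (link D c s == (c', s'))) ||
  (~~ o && o' && (link D c' s' == (c, s))).

Definition nclasses (T : finType) (r : rel T) : nat :=
  #|[set [set y | connect r x y] | x : T]|.

(* counterclockwise rotation at a crossing: in1 -> in2 -> out1 -> out2 -> in1 *)
Definition rot (d : dart C) : dart C :=
  let: (c, s, o) := d in (c, ~~ s, s (+) o).

Definition face_rel (d d' : dart C) : bool :=
  [exists e : dart C, ext_rel d e && (d' == rot e)].

Definition comp_rel (d d' : dart C) : bool :=
  ext_rel d d' || (d.1.1 == d'.1.1).

(* Euler's formula V - E + F = 2 (#components) with V = #|C|, E = 2 #|C|;   *)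
(* this is exactly the condition that the 4-valent graph with the rotation  *)
(* system given by the crossings is a disjoint union of plane graphs, i.e.   *)
(* that D comes from a generic immersion of circles in R^2.                 *)
Definition planar : Prop :=
  nclasses face_rel = (#|C| + 2 * nclasses comp_rel)%N.

(* A state: res c = true  <-> oriented resolution at c,                       *)
(*                  false <-> disoriented resolution at c                     *)
(* (ignored at virtual crossings).                                           *)
Variable res : C -> bool.

(* the half-edge at the same crossing to which d is joined inside the state *)
Definition inner (d : dart C) : dart C :=
  let: (c, s, o) := d in
  if is_virtual (kind D c) then (c, s, ~~ o)          (* in1-out1, in2-out2 *)
  else if res c then (c, ~~ s, ~~ o)                   (* oriented: in1-out2, in2-out1 *)
  else (c, ~~ s, o).                                   (* disoriented: in1-in2 (sink), out1-out2 (source) *)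

(* d is joined to inner d through a bivalent vertex *)
Definition at_vertex (d : dart C) : bool :=
  ~~ is_virtual (kind D d.1.1) && ~~ res d.1.1.

Definition curve_rel (d e : dart C) : bool := ext_rel d e || (e == inner d).

(* ||S|| : number of closed curves of S *)
Definition nS : nat := (ncirc D + nclasses curve_rel)%N.

(* edges of S: classes of darts joined without passing a bivalent vertex *)
Definition arc_rel (d e : dart C) : bool :=
  ext_rel d e || ((e == inner d) && ~~ at_vertex d).

(* weight maps, seen on darts (constant on each edge of S); the closed curves *)
(* without double points are edges too but play no role in i(S).            *)
Definition weightb (tau : {ffun dart C -> bool}) : bool :=
  [forall d, forall e, arc_rel d e ==> (tau d == tau e)] &&
  [forall d, at_vertex d ==> (tau d != tau (inner d))].

Definition sgb (b : bool) : int := if b then 1%R else (-1)%R.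

(* i(S) = prod over virtual crossings v of tau(e_v) tau(e_v'), computed for   *)
(* a chosen weight map (independent of the choice).                          *)
Definition ipar : int :=
  if [pick tau | weightb tau] is Some tau then
    (\prod_(c | is_virtual (kind D c))
        (sgb (tau (c, false, false)) * sgb (tau (c, true, false))))%R
  else 1%R.

Definition a_S : int :=
  (#|[set c | is_neg (kind D c) && res c]|%:Z - #|[set c | is_pos (kind D c) && res c]|%:Z)%R.
Definition b_S : int :=
  (#|[set c | is_neg (kind D c) && ~~ res c]|%:Z - #|[set c | is_pos (kind D c) && ~~ res c]|%:Z)%R.
Definition alpha_S : nat := #|[set c | is_singular (kind D c) && res c]|.
Definition beta_S : nat := #|[set c | is_singular (kind D c) && ~~ res c]|.

Definition maxA : int :=
  (2 * a_S + 4 * b_S + 2 * (alpha_S + nS)%:Z + 4 * beta_S%:Z)%R.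

End Defs.

Definition flip_at (C : finType) (res : C -> bool) (c0 : C) : C -> bool :=
  fun c => if c == c0 then ~~ res c else res c.

(* Main.v *)
Require Import Defs.
From HB Require Import structures.
From mathcomp Require Import all_boot all_order all_algebra.
From mathcomp Require Import zify.
From Stdlib Require Import FunctionalExtensionality.
Set Implicit Arguments. Unset Strict Implicit. Unset Printing Implicit Defensive.

Module P1.
Import Order.TTheory GRing.Theory Num.Theory.

Section Basic.
Variables (C : finType) (D : diagram C).
Local Notation N := (dart C).

Definition linf (p : C * bool) : C * bool := link D p.1 p.2.
Lemma linf_inj : injective linf.
Proof. move=> p q; exact: (@link_inj _ D p q). Qed.
Definition linv : C * bool -> C * bool := invF linf_inj.
Lemma linfK : cancel linf linv. Proof. exact: invF_f. Qed.
Lemma linvK : cancel linv linf. Proof. exact: f_invF. Qed.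

Definition extf (d : N) : N :=
  let: (c, s, o) := d in
  if o then ((linf (c, s)), false) else (linv (c, s), true).

Lemma extfK : involutive extf.
Proof.
move=> [[c s] o]; case: o => /=.
- by case E: (linf (c, s)) => [c' s'] /=; rewrite -E linfK.
- by case E: (linv (c, s)) => [c' s'] /=; rewrite -E linvK.
Qed.
Lemma extf_inj : injective extf. Proof. exact: inv_inj extfK. Qed.
Lemma extf_o d : (extf d).2 = ~~ d.2.
Proof. by case: d => [[c s] []]. Qed.

Lemma ext_relE d e : ext_rel D d e = (e == extf d).
Proof.
case: d => [[c s] o]; case: e => [[c' s'] o'] /=.
case: o; case: o' => /=; rewrite ?orbF ?andbF /= ?xpair_eqE ?andbT ?andbF //.
apply/eqP/eqP => E.
  + by have := linfK (c', s'); rewrite /linf /= E => <-.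
  + by rewrite -[link D c' s']/(linf (c', s')) E linvK.
Qed.

Lemma ext_rel_sym : symmetric (ext_rel D).
Proof.
move=> d e; rewrite !ext_relE; apply/eqP/eqP => [->|->]; by rewrite extfK.
Qed.

End Basic.

End P1.
Import P1.

Module P2.
Import Order.TTheory GRing.Theory Num.Theory.
Local Open Scope ring_scope.

Definition F2 := 'F_2.

Lemma F2_two : (1 + 1 : F2) = 0. Proof. by apply/val_inj. Qed.
Lemma F2cases (a : F2) : a = 0 \/ a = 1.
Proof. case: a => [[|[|]]] // H; [left|right]; exact/val_inj. Qed.
Lemma F2_add_self (a : F2) : a + a = 0.
Proof. by case: (F2cases a) => ->; rewrite ?addr0 ?F2_two. Qed.

Lemma connect_ind_pred (T : finType) (e : rel T) (P : T -> Prop) x :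
  P x -> (forall y z, P y -> e y z -> P z) -> forall y, connect e x y -> P y.
Proof.
move=> Px Hs y /connectP [p]; elim: p x Px => [|z p IH] x Px /=; first by move=> _ ->.
by case/andP=> exz pz ey; apply: (IH z) => //; exact: Hs exz.
Qed.

Lemma sym_connect_sym (T : finType) (e : rel T) : symmetric e -> connect_sym e.
Proof.
move=> es.
have H : forall x y, connect e x y -> connect e y x.
  move=> x y; apply: (connect_ind_pred (P := fun z => connect e z x)) => // z w Hz ezw.
  by apply: connect_trans Hz; apply: connect1; rewrite es.
by move=> x y; apply/idP/idP; apply: H.
Qed.

Section Classes.
Variables (T : finType) (r : rel T).
Hypothesis rsym : connect_sym r.
Definition classes := [set [set y | connect r x y] | x : T].
Lemma cl_proof x : [set y | connect r x y] \in classes.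
Proof. by apply/imsetP; exists x. Qed.
Definition QT := {X : {set T} | X \in classes}.
Definition cl x : QT := exist _ [set y | connect r x y] (cl_proof x).

Lemma cl_eq x y : connect r x y -> cl x = cl y.
Proof.
move=> cxy; apply/val_inj/setP => z /=; rewrite !inE.
apply/idP/idP => H; first by rewrite (connect_trans _ H) // rsym.
exact: connect_trans cxy H.
Qed.

Lemma cl_surj (X : QT) : exists x, X = cl x.
Proof.
case: X => X HX; case/imsetP: (HX) => x _ EX; exists x; exact/val_inj.
Qed.

Lemma card_QT : #|{: QT}| = nclasses r.
Proof. by rewrite card_sig. Qed.

Definition VT := {ffun T -> F2^o}.
Definition VQ := {ffun QT -> F2^o}.
Definition psi (h : VQ) : VT := [ffun x => h (cl x)].
Lemma psi_lin : linear psi.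
Proof. by move=> a u v; apply/ffunP=> x; rewrite !ffunE. Qed.
HB.instance Definition _ := GRing.isLinear.Build F2 VQ VT _ psi psi_lin.

Definition CFsp : {vspace VT} := limg (linfun psi).

Lemma psi_inj : injective psi.
Proof.
move=> h1 h2 E; apply/ffunP => X; case: (cl_surj X) => x ->.
by have := congr1 (fun g : VT => g x) E; rewrite !ffunE.
Qed.

Lemma dim_CF : \dim CFsp = nclasses r.
Proof.
rewrite /CFsp limg_dim_eq.
  by rewrite dimvf /dim /= muln1 card_QT.
apply/eqP; rewrite -subv0; apply/subvP => h; rewrite memv_cap memv_ker.
case/andP=> _ /eqP; rewrite lfunE /= => E; rewrite memv0; apply/eqP.
by apply: psi_inj; rewrite E linear0.
Qed.

Lemma mem_CF (g : VT) : (forall x y, r x y -> g x = g y) -> g \in CFsp.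
Proof.
move=> Hg.
have Hc : forall x y, connect r x y -> g x = g y.
  move=> x y /connectP [p]; elim: p x => [|z p IH] x /=; first by move=> _ ->.
  by case/andP=> rxz pz ey; rewrite (Hg _ _ rxz); exact: IH.
pose h : VQ := [ffun X : QT => (if [pick y in val X] is Some y then g y else 0 : F2^o)].
have -> : g = psi h.
  apply/ffunP => x; rewrite !ffunE; case: pickP => [y /=|/(_ x) /=].
    by rewrite inE => /Hc.
  by rewrite inE connect0.
by have := memv_img (linfun psi) (memvf h); rewrite lfunE.
Qed.

Lemma CF_const (g : VT) x y : g \in CFsp -> connect r x y -> g x = g y.
Proof.
case/memv_imgP => h _ ->; rewrite !lfunE /= !ffunE => cxy.
by rewrite (cl_eq cxy).
Qed.
End Classes.

End P2.
Import P2.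

Module P3.
Import Order.TTheory GRing.Theory Num.Theory.
Local Open Scope ring_scope.

Section Planar.
Variables (C : finType) (D : diagram C).
Local Notation N := (dart C).
Definition drot : N -> N := @Defs.rot C.
Lemma drot_inj : injective drot.
Proof.
move=> [[c s] o] [[c' s'] o'] /= [-> E1 E2].
by case: s s' o o' E1 E2 => [] [] [] [].
Qed.

Definition phi (d : N) : N := drot (extf D d).
Lemma phi_inj : injective phi.
Proof. by move=> x y /drot_inj /extf_inj. Qed.

Lemma face_relE d d' : face_rel D d d' = (phi d == d').
Proof.
rewrite eq_sym; apply/existsP/eqP => [[e /andP [He /eqP ->]]|->].
  by move: He; rewrite ext_relE => /eqP ->.
by exists (extf D d); rewrite ext_relE !eqxx.
Qed.

Lemma face_sym : connect_sym (face_rel D).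
Proof.
move=> x y; rewrite !(eq_connect face_relE); exact: fconnect_sym phi_inj x y.
Qed.

Lemma comp_sym : connect_sym (comp_rel D).
Proof.
apply: sym_connect_sym => x y; rewrite /comp_rel ext_rel_sym; congr (_ || _).
exact: eq_sym.
Qed.

Definition VN := {ffun N -> F2^o}.
Definition VO := {ffun (C * bool) -> F2^o}.
Definition VC := {ffun C -> F2^o}.

Definition PhiO (g : VN) : VO :=
  [ffun cs : C * bool => g (cs.1, cs.2, true) + g (drot (cs.1, cs.2, true))].
Definition Bm (x : VO) : VC :=
  [ffun c => \sum_(cs : C * bool) x cs * ((cs.1 == c)%:R + ((linf D cs).1 == c)%:R)].
Definition Mm (w : VC) : VO := [ffun cs : C * bool => w cs.1 + w (linf D cs).1].
Definition pullC (w : VC) : VN := [ffun d : N => w d.1.1].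

Lemma PhiO_lin : linear PhiO.
Proof. by move=> a u v; apply/ffunP=> x; rewrite !ffunE scalerDr addrACA. Qed.
Lemma Bm_lin : linear Bm.
Proof.
move=> a u v; apply/ffunP=> c; rewrite !ffunE scaler_sumr -big_split /=.
by apply: eq_bigr => cs _; rewrite !ffunE mulrDl scalerAl.
Qed.
Lemma Mm_lin : linear Mm.
Proof. by move=> a u v; apply/ffunP=> x; rewrite !ffunE scalerDr addrACA. Qed.
Lemma pullC_lin : linear pullC.
Proof. by move=> a u v; apply/ffunP=> x; rewrite !ffunE. Qed.
HB.instance Definition _ := GRing.isLinear.Build F2 VN VO _ PhiO PhiO_lin.
HB.instance Definition _ := GRing.isLinear.Build F2 VO VC _ Bm Bm_lin.
Definition Mm' := Mm.
HB.instance Definition _ := GRing.isLinear.Build F2 VC VO _ Mm' Mm_lin.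
Definition pullC' := pullC.
HB.instance Definition _ := GRing.isLinear.Build F2 VC VN _ pullC' pullC_lin.

Definition pairC (u w : VC) : F2 := \sum_c u c * w c.

Lemma sum_ind (f : C -> F2) c : \sum_c' (c == c')%:R * f c' = f c.
Proof.
rewrite (bigD1 c) //= eqxx mul1r big1 ?addr0 // => c' /negbTE.
by rewrite eq_sym => ->; rewrite mul0r.
Qed.

Lemma pairC_Bm x w : pairC (Bm x) w = \sum_cs x cs * Mm w cs.
Proof.
rewrite /pairC.
under eq_bigr do rewrite ffunE mulr_suml.
rewrite exchange_big /=; apply: eq_bigr => cs _; rewrite ffunE.
under eq_bigr do rewrite -mulrA.
rewrite -mulr_sumr; congr (_ * _).
under eq_bigr do rewrite mulrDl.
by rewrite big_split /= !sum_ind.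
Qed.


Lemma pairC_suml n (a : 'I_n -> F2) (v : 'I_n -> VC) w :
  pairC (\sum_i a i *: v i) w = \sum_i a i * pairC (v i) w.
Proof.
rewrite /pairC.
under eq_bigr do rewrite sum_ffunE mulr_suml.
rewrite exchange_big /=; apply: eq_bigr => i _; rewrite mulr_sumr.
by apply: eq_bigr => c _; rewrite ffunE mulrA.
Qed.

Lemma dimVC : \dim (fullv : {vspace VC}) = #|C|.
Proof. by rewrite dimvf /dim /= muln1. Qed.
Lemma dimVO : \dim (fullv : {vspace VO}) = (#|C| * 2)%N.
Proof. by rewrite dimvf /dim /= muln1 card_prod card_bool. Qed.
Lemma dimVN : \dim (fullv : {vspace VN}) = (#|C| * 4)%N.
Proof. by rewrite dimvf /dim /= muln1 !card_prod card_bool -mulnA. Qed.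

Lemma rank_BM :
  (#|C| <= \dim (lker (linfun Mm')) + \dim (limg (linfun Bm)))%N.
Proof.
set U := limg (linfun Bm); set n := \dim U; set X := vbasis U.
pose P (w : VC) : {ffun 'I_n -> F2^o} := [ffun i : 'I_n => (pairC X`_i w : F2^o)].
have P_lin : linear P.
  move=> a u v; apply/ffunP => i; rewrite !ffunE /pairC scaler_sumr -big_split.
  by apply: eq_bigr => c _; rewrite !ffunE mulrDr scalerAr.
pose PL : {linear VC -> {ffun 'I_n -> F2^o}} := HB.pack P (GRing.isLinear.Build F2 VC _ _ P P_lin).
have Hd := limg_ker_dim (linfun PL) fullv.
have HP : (\dim (linfun PL @: fullv) <= n)%N.
  by rewrite (leq_trans (dimvS (subvf _))) // dimvf /dim /= muln1 card_ord.
have Hk : (fullv :&: lker (linfun PL) <= lker (linfun Mm'))%VS.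
  apply/subvP => w; rewrite memv_cap memv_ker lfunE => /andP[_ /eqP Pw].
  rewrite memv_ker lfunE; apply/eqP/ffunP => cs /=; rewrite [RHS]ffunE.
  pose dl : VO := [ffun cs' => (cs' == cs)%:R].
  have -> : Mm' w cs = pairC (Bm dl) w.
    rewrite pairC_Bm (bigD1 cs) //= !ffunE eqxx mul1r big1 ?addr0 // => cs' /negbTE.
    by rewrite ffunE => ->; rewrite mul0r.
  have Bin : Bm dl \in U.
    by have := memv_img (linfun Bm) (memvf dl); rewrite lfunE.
  rewrite (coord_vbasis Bin) pairC_suml big1 // => i _.
  have := congr1 (fun f : {ffun 'I_n -> F2^o} => f i) Pw; rewrite /= !ffunE => ->.
  by rewrite mulr0.
have := dimvS Hk; rewrite dimVC in Hd; lia.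
Qed.


Lemma F2_add_eq0 (a b : F2) : (a + b == 0) = (a == b).
Proof. by case: (F2cases a) => ->; case: (F2cases b) => ->. Qed.

Lemma dim_kerM : (\dim (lker (linfun Mm')) <= nclasses (comp_rel D))%N.
Proof.
set W := lker (linfun Mm').
have inj : (W :&: lker (linfun pullC') = 0)%VS.
  apply/eqP; rewrite -subv0; apply/subvP => w; rewrite memv_cap memv_ker lfunE.
  case/andP=> _ /eqP E; rewrite memv0; apply/eqP/ffunP => c.
  have := congr1 (fun f : VN => f (c, false, false)) E; by rewrite /= !ffunE.
rewrite -(limg_dim_eq inj) -(dim_CF (comp_rel D)) dimvS //.
apply/subvP => g /memv_imgP [w]; rewrite memv_ker lfunE /= => /eqP Mw ->.
rewrite lfunE /=; apply: mem_CF => x y; rewrite /comp_rel !ffunE.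
have Hw : forall cs, w cs.1 = w (linf D cs).1.
  move=> cs; have := congr1 (fun f : VO => f cs) Mw; rewrite /= !ffunE.
  by move/eqP; rewrite F2_add_eq0 => /eqP.
case/orP => [|/eqP -> //]; rewrite ext_relE => /eqP ->.
case: x => [[c s] []] /=; first exact: (Hw (c, s)).
by rewrite (Hw (linv D (c, s))) linvK.
Qed.

Lemma dim_Z : (\dim (lker (linfun Bm)) <= #|C| + nclasses (comp_rel D))%N.
Proof.
have := limg_ker_dim (linfun Bm) fullv; rewrite capfv dimVO.
have := rank_BM; have := dim_kerM; lia.
Qed.

Lemma sum_pair (f : C * bool -> F2) : \sum_cs f cs = \sum_c (f (c, false) + f (c, true)).
Proof.
transitivity (\sum_(p : C * bool) f (p.1, p.2)); first by apply: eq_bigr => -[].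
rewrite -(pair_bigA _ (fun c s => f (c, s))) /=.
by apply: eq_bigr => c _; rewrite big_bool /= addrC.
Qed.

Lemma sum_ind1 (f : C * bool -> F2) c :
  \sum_cs f cs * (cs.1 == c)%:R = f (c, false) + f (c, true).
Proof.
rewrite sum_pair /= (bigD1 c) //= eqxx !mulr1 big1 ?addr0 // => c' /negbTE ->.
by rewrite !mulr0 addr0.
Qed.

Lemma F2_ex4 (a b c d : F2) : a + b + (b + d) + (c + d + (a + c)) = 0.
Proof.
by case: (F2cases a) => ->; case: (F2cases b) => ->; case: (F2cases c) => ->;
  case: (F2cases d) => ->; apply/val_inj.
Qed.

Lemma Dom_phi (g : VN) d : g \in CFsp (face_rel D) -> g (phi d) = g d.
Proof.
move=> Hg; symmetry; apply: (CF_const face_sym Hg); apply: connect1.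
by rewrite face_relE.
Qed.

Lemma rot_in (d : N) : drot d = phi (extf D d).
Proof. by rewrite /phi extfK. Qed.

Lemma img_PhiO : (linfun PhiO @: CFsp (face_rel D) <= lker (linfun Bm))%VS.
Proof.
apply/subvP => x /memv_imgP [g Hg ->]; rewrite memv_ker !lfunE /=.
apply/eqP/ffunP => c; rewrite !ffunE.
under eq_bigr do rewrite mulrDr.
rewrite big_split /= sum_ind1.
rewrite (reindex_inj (can_inj (linvK D))) /=.
under eq_bigr do rewrite linvK.
have E1 : forall s, g ((linv D (c, s)).1, (linv D (c, s)).2, true) = g (drot (c, s, false)).
  move=> s; rewrite rot_in Dom_phi //=.
  by case: (linv D (c, s)) => c' s'.
have E2 : forall s, g (drot ((linv D (c, s)).1, (linv D (c, s)).2, true)) = g (c, s, false).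
  move=> s; rewrite -(Dom_phi (c, s, false) Hg) /phi /=.
  by case: (linv D (c, s)) => c' s'.
rewrite sum_ind1 !ffunE !E1 !E2 /=; exact: F2_ex4.
Qed.

Lemma ker2 : (CFsp (face_rel D) :&: lker (linfun PhiO) <= CFsp (comp_rel D))%VS.
Proof.
apply/subvP => g; rewrite memv_cap memv_ker lfunE => /andP [Hg /eqP Pg].
have Hout : forall c s, g (drot (c, s, true)) = g (c, s, true).
  move=> c s; have := congr1 (fun f : VO => f (c, s)) Pg; rewrite /= !ffunE.
  by move/eqP; rewrite F2_add_eq0 => /eqP.
have Hrot : forall d, g (drot d) = g d.
  move=> [[c s] []]; first exact: Hout.
  rewrite rot_in Dom_phi // -[extf D _]/(linv D (c, s), true).
  case E: (linv D (c, s)) => [c' s']; rewrite -Hout -E.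
  by rewrite -/(extf D (c, s, false)) -/(phi (c, s, false)) Dom_phi.
have Hext : forall d, g (extf D d) = g d.
  by move=> d; rewrite -Hrot -/(phi d) Dom_phi.
apply: mem_CF => x y; rewrite /comp_rel; case/orP => [|].
  by rewrite ext_relE => /eqP ->.
move: x y => [[c s] o] [[c' s'] o'] /= /eqP <-.
have e1 := Hrot (c, false, false); have e2 := Hrot (c, true, false).
have e3 := Hrot (c, false, true); have e4 := Hrot (c, true, true).
rewrite /= in e1 e2 e3 e4.
have E : forall s o, g (c, s, o) = g (c, false, false).
  move=> [] [].
  - by rewrite e4.
  - by rewrite e1.
  - by rewrite e2 e1.
  - by [].
by rewrite !E.
Qed.

Lemma surj_Phi : planar D -> (linfun PhiO @: CFsp (face_rel D))%VS = lker (linfun Bm).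
Proof.
rewrite /planar => Hp; apply/eqP; rewrite eqEdim img_PhiO /=.
have := limg_ker_dim (linfun PhiO) (CFsp (face_rel D)).
rewrite dim_CF; have := dimvS ker2; rewrite dim_CF.
have := dim_Z. move: Hp. set F := nclasses _. set K := nclasses (comp_rel D). set z := \dim (lker _). set u := \dim (_ :&: _). set v := \dim (_ @: _). move=> *. lia.
Qed.

Lemma F2_bool4 (a b c d : bool) : ~~ odd (a + b + c + d) ->
  (a%:R + b%:R + (c%:R + d%:R) : F2) = 0.
Proof. by case: a; case: b; case: c; case: d => //= _; apply/val_inj. Qed.

Lemma F2_bool_sum (a b : F2) (k : bool) : a + b = k%:R -> (b == 1) = (a == 1) (+) k.
Proof.
by case: (F2cases a) => ->; case: (F2cases b) => ->; case: k => /= /val_eqP.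
Qed.

Lemma face_coloring : planar D -> forall K : N -> bool,
  (forall d, K (extf D d) = K d) ->
  (forall c, ~~ odd (K (c, false, false) + K (c, false, true) + K (c, true, false) + K (c, true, true))) ->
  exists g : N -> bool, (forall d, g (phi d) = g d) /\ (forall d, g (drot d) = g d (+) K d).
Proof.
move=> Hp K Ke Kv.
pose x : VO := [ffun cs : C * bool => ((K (cs.1, cs.2, true))%:R : F2^o)].
have Hx : x \in lker (linfun Bm).
  rewrite memv_ker lfunE /=; apply/eqP/ffunP => c; rewrite !ffunE.
  under eq_bigr do rewrite mulrDr.
  rewrite big_split /= sum_ind1.
  rewrite (reindex_inj (can_inj (linvK D))) /=.
  under eq_bigr do rewrite linvK.
  rewrite sum_ind1 !ffunE /=.
  have E : forall s, K ((linv D (c, s)).1, (linv D (c, s)).2, true) = K (c, s, false).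
    move=> s; rewrite -[in RHS]Ke /=; by case: (linv D (c, s)).
  rewrite !E; have := Kv c.
  by case: (K (c, false, false)); case: (K (c, false, true)); case: (K (c, true, false));
     case: (K (c, true, true)) => //= _; apply/val_inj.
rewrite -(surj_Phi Hp) in Hx; case/memv_imgP: Hx => g Hg; rewrite lfunE /= => Hgx.
exists (fun d => g d == 1); split; first by move=> d; rewrite Dom_phi.
have Hout : forall c s, g (c, s, true) + g (drot (c, s, true)) = (K (c, s, true))%:R.
  by move=> c s; have := congr1 (fun f : VO => f (c, s)) Hgx; rewrite /= !ffunE.
move=> [[c s] []]; first by apply: F2_bool_sum; exact: Hout.
rewrite rot_in Dom_phi // -[in X in _ = X (+) _](Dom_phi _ Hg) /phi -[K _]Ke addbC.
rewrite /=; case E: (linv D (c, s)) => [c' s'].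
have := F2_bool_sum (Hout c' s'); rewrite /= => ->.
by case: (g (c', s', true) == 1); case: (K (c', s', true)).
Qed.

End Planar.

End P3.
Import P3.

Module P4.
Import Order.TTheory GRing.Theory Num.Theory.

Section Parity.
Variables (C : finType) (D : diagram C).
Local Notation N := (dart C).

Definition strand (K : N -> bool) (c : C) : bool :=
  [&& K (c, false, false) == K (c, false, true), K (c, true, false) == K (c, true, true)
    & K (c, false, false) != K (c, true, false)].

Definition veven (K : N -> bool) (c : C) : bool :=
  ~~ odd (K (c, false, false) + K (c, false, true) + K (c, true, false) + K (c, true, true)).

Lemma odd_sum_odd (I : finType) (f : I -> nat) :
  odd (\sum_i f i) = odd (\sum_i (odd (f i) : nat)).
Proof.
elim/big_rec2: _ => //= i a b _ Hab; by rewrite !oddD Hab oddb.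
Qed.

Lemma sum_dart (f : N -> nat) :
  \sum_d f d = \sum_(cs : C * bool) f (cs.1, cs.2, false) + \sum_(cs : C * bool) f (cs.1, cs.2, true).
Proof.
transitivity (\sum_(p : (C * bool) * bool) f (p.1, p.2)); first by apply: eq_bigr => -[].
rewrite -(pair_bigA _ (fun cs o => f (cs, o))) /= -big_split /=.
by apply: eq_bigr => -[c s] _; rewrite big_bool /= addnC.
Qed.

Lemma sum_CB (f : C * bool -> nat) :
  \sum_(cs : C * bool) f cs = \sum_c (f (c, false) + f (c, true)).
Proof.
transitivity (\sum_(p : C * bool) f (p.1, p.2)); first by apply: eq_bigr => -[].
rewrite -(pair_bigA _ (fun c s => f (c, s))) /=.
by apply: eq_bigr => c _; rewrite big_bool /= addnC.
Qed.

Lemma parity (K : N -> bool) : planar D ->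
  (forall d, K (extf D d) = K d) -> (forall c, veven K c) ->
  ~~ odd #|[set c | strand K c]|.
Proof.
move=> Hp Ke Kv; have [g [Hg1 Hg2]] := face_coloring Hp Ke Kv.
pose w d := ~~ K d && g d.
have we : forall d, w (extf D d) = w d.
  move=> d; rewrite /w Ke; case Kd: (K d) => //=.
  by rewrite -Hg1 /phi extfK Hg2 Kd addbF.
have Heven : ~~ odd (\sum_d (w d : nat)).
  rewrite sum_dart.
  rewrite (reindex_inj (@linf_inj _ D)) /=.
  have -> : \sum_(cs : C * bool) (w ((linf D cs).1, (linf D cs).2, false) : nat)
          = \sum_(cs : C * bool) (w (cs.1, cs.2, true) : nat).
    apply: eq_bigr => -[c s] _ /=; rewrite -we /=.
    by rewrite -surjective_pairing linfK.
  by rewrite addnn odd_double.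
have Hloc : forall c, odd (w (c, false, false) + w (c, false, true) + w (c, true, false) + w (c, true, true)) = strand K c.
  move=> c; have := Kv c; rewrite /veven /strand /w.
  have r1 := Hg2 (c, false, false); have r2 := Hg2 (c, true, false).
  have r3 := Hg2 (c, false, true); have r4 := Hg2 (c, true, true).
  rewrite /= in r1 r2 r3 r4; move: r1 r2 r3 r4.
  case: (g (c, false, false)); case: (g (c, true, false)); case: (g (c, false, true));
  case: (g (c, true, true));
  case: (K (c, false, false)); case: (K (c, true, false));
  case: (K (c, false, true)); case: (K (c, true, true)) => //.
 have -> : #|[set c | strand K c]| = \sum_c (strand K c : nat).
  by rewrite -sum1_card big_mkcond /=; apply: eq_bigr => c _; rewrite inE; case: strand.
move: Heven; rewrite sum_dart !sum_CB -big_split /= odd_sum_odd => H.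
rewrite odd_sum_odd; apply: etrans H; congr (~~ odd _).
apply: eq_bigr => c _; rewrite -Hloc /= oddb; congr odd; lia.
Qed.

End Parity.

End P4.
Import P4.

Module P5.
Import Order.TTheory GRing.Theory Num.Theory.

Section State.
Variables (C : finType) (D : diagram C) (res : C -> bool).
Local Notation N := (dart C).
Local Notation inner := (inner D res).
Local Notation at_vertex := (at_vertex D res).
Local Notation virt c := (is_virtual (kind D c)).

Lemma inner_c d : (inner d).1.1 = d.1.1.
Proof. case: d => [[c s] o]; rewrite /Defs.inner /=; by case: (is_virtual (kind D c)) => //; case: (res c). Qed.

Lemma innerK : involutive inner.
Proof.
move=> [[c s] o]; rewrite /Defs.inner /=.
by case Hv: (is_virtual (kind D c)); case Hr: (res c) => /=; rewrite ?Hv ?Hr /= ?negbK.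
Qed.
Lemma inner_inj : injective inner. Proof. exact: inv_inj innerK. Qed.

Lemma at_vertex_inner d : at_vertex (inner d) = at_vertex d.
Proof. by rewrite /Defs.at_vertex inner_c. Qed.

Lemma inner_o d : (inner d).2 = if at_vertex d then d.2 else ~~ d.2.
Proof.
case: d => [[c s] o]; rewrite /Defs.inner /Defs.at_vertex /=.
by case: (is_virtual (kind D c)); case: (res c).
Qed.

Lemma inner_neq d : inner d != d.
Proof.
case: d => [[c s] o]; rewrite /Defs.inner /=.
by case: (is_virtual (kind D c)); case: (res c); rewrite /= !xpair_eqE; case: s; case: o; rewrite /= ?andbF.
Qed.

Lemma extf_neq d : extf D d != d.
Proof.
by apply/eqP => E; have := congr1 snd E; rewrite extf_o; case: d.2.
Qed.

Lemma weightP (tau : {ffun N -> bool}) :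
  reflect [/\ forall d, tau (extf D d) = tau d,
              forall d, ~~ at_vertex d -> tau (inner d) = tau d &
              forall d, at_vertex d -> tau (inner d) != tau d]
          (weightb D res tau).
Proof.
apply: (iffP andP) => [[/forallP H1 /forallP H2]|[H1 H2 H3]].
  split.
  - move=> d; have := H1 d => /forallP /(_ (extf D d)).
    by rewrite /arc_rel ext_relE eqxx /= => /eqP.
  - move=> d Hd; have := H1 d => /forallP /(_ (inner d)).
    by rewrite /arc_rel eqxx Hd orbT /= => /eqP.
  - by move=> d Hd; have := H2 d; rewrite Hd eq_sym.
split; apply/forallP => d; last by apply/implyP => /H3; rewrite eq_sym.
apply/forallP => e; apply/implyP; rewrite /arc_rel ext_relE.
case/orP => [/eqP -> | /andP [/eqP -> /H2 ->]] //.
by rewrite H1.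
Qed.

Definition rho (d : N) : N := inner (extf D d).
Lemma rho_inj : injective rho.
Proof. by move=> x y /inner_inj /extf_inj. Qed.
Lemma rho_e_rho d : rho (extf D (rho d)) = extf D d.
Proof. unfold rho; by rewrite extfK innerK. Qed.
Lemma inner_rho d : inner d = rho (extf D d).
Proof. unfold rho; by rewrite extfK. Qed.

Lemma no_self_orbit x : ~~ fconnect rho x (extf D x).
Proof.
apply/negP => /iter_findex; set n := findex _ _ _ => En.
have H : forall j, j <= n -> extf D (iter j rho x) = iter (n - j) rho x.
  elim=> [|j IH] Hj; first by rewrite subn0 En.
  apply: rho_inj; rewrite rho_e_rho /= IH 1?ltnW //.
  have -> : n - j = (n - j.+1).+1 by lia.
  by [].
have Edh := odd_double_half n; rewrite -muln2 in Edh.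
set m := n./2 in Edh *.
case: (boolP (odd n)) => Hn; rewrite ?Hn ?(negbTE Hn) /= in Edh.
- have := H m.+1 ltac:(lia).
  have -> : n - m.+1 = m by lia.
  rewrite iterS => E.
  have E' : rho (iter m rho x) = extf D (iter m rho x) by rewrite -[LHS](extfK D) E.
  by have := inner_neq (extf D (iter m rho x)); rewrite inner_rho extfK E' eqxx.
- have := H m ltac:(lia).
  have -> : n - m = m by lia.
  by move=> E; have := extf_neq (iter m rho x); rewrite E eqxx.
Qed.

Lemma fc_rho x y : fconnect rho (rho x) y = fconnect rho x y.
Proof. by rewrite -(same_fconnect1 rho_inj). Qed.
Lemma fc_sym x y : fconnect rho x y = fconnect rho y x.
Proof. exact: fconnect_sym rho_inj x y. Qed.

Definition Uo (x : N) : {set N} := [set y | fconnect rho x y || fconnect rho (extf D x) y].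
Lemma Uo_rho x : Uo (rho x) = Uo x.
Proof.
apply/setP => y; rewrite !inE fc_rho; congr (_ || _).
by rewrite -fc_rho rho_e_rho.
Qed.
Lemma Uo_e x : Uo (extf D x) = Uo x.
Proof. by apply/setP => y; rewrite !inE extfK orbC. Qed.

Definition rp (x : N) : N := if [pick y in Uo x] is Some y then y else x.
Definition qo (x : N) : bool := fconnect rho x (rp x).

Lemma qo_rho x : qo (rho x) = qo x.
Proof. unfold qo, rp; rewrite Uo_rho; case: pickP => [y _|/(_ x)]; [exact: fc_rho | by rewrite inE connect0]. Qed.
Lemma qo_e x : qo (extf D x) = ~~ qo x.
Proof.
rewrite /qo /rp Uo_e; case: pickP => [y|/(_ x)]; last by rewrite inE connect0.
rewrite inE => /orP Hy.
case E1: (fconnect rho x y); case E2: (fconnect rho (extf D x) y) => //=.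
- have := no_self_orbit x; rewrite (connect_trans E1) //.
  by rewrite fc_sym.
- by case: Hy; rewrite ?E1 ?E2.
Qed.
Lemma qo_inner x : qo (inner x) = ~~ qo x.
Proof. by rewrite inner_rho qo_rho qo_e. Qed.

Lemma weight_exists : exists tau, weightb D res tau.
Proof.
exists [ffun d => qo d (+) d.2]; apply/weightP; split => [d|d Hd|d Hd]; rewrite !ffunE.
- by rewrite qo_e extf_o; case: (qo d); case: d.2.
- by rewrite qo_inner inner_o (negbTE Hd); case: (qo d); case: d.2.
- by rewrite qo_inner inner_o Hd; case: (qo d); case: d.2.
Qed.

Lemma inner_closed_veven (K : N -> bool) c :
  (forall d, d.1.1 = c -> K (inner d) = K d) -> veven K c /\ (strand K c -> virt c) /\
  (virt c -> K (c, false, false) (+) K (c, true, false) = strand K c).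
Proof.
move=> Ki; have k1 := Ki (c, false, false) erefl; have k2 := Ki (c, true, false) erefl.
have k3 := Ki (c, false, true) erefl; have k4 := Ki (c, true, true) erefl.
rewrite /Defs.inner /= in k1 k2 k3 k4; rewrite /veven /strand.
case: (virt c) k1 k2 k3 k4; [|case: (res c)] => /= k1 k2 k3 k4;
  rewrite ?k1 ?k2 ?k3 ?k4 in k1 k2 k3 k4 *; move: k1 k2 k3 k4;
  case: (K (c, false, false)); case: (K (c, true, false));
  case: (K (c, false, true)); case: (K (c, true, true)) => //.
Qed.

End State.

Section Pr.
Variables (C : finType) (D : diagram C).
Local Notation N := (dart C).
Local Notation virt c := (is_virtual (kind D c)).
Local Open Scope ring_scope.

Definition Pr (tau : {ffun N -> bool}) : int :=
  \prod_(c | virt c) (sgb (tau (c, false, false)) * sgb (tau (c, true, false))).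

Definition sg (b : bool) : int := if b then -1 else 1.

Lemma Pr_xor (tau : {ffun N -> bool}) (K : N -> bool) :
  Pr [ffun d => tau d (+) K d] =
  Pr tau * \prod_(c | virt c) sg (K (c, false, false) (+) K (c, true, false)).
Proof.
rewrite /Pr -big_split /=; apply: eq_bigr => c _; rewrite !ffunE /sg /sgb.
by case: (tau _); case: (tau _); case: (K _); case: (K _); rewrite /= ?mulrN ?mulNr ?mulr1 ?mul1r ?opprK.
Qed.

Lemma prod_sg (P : pred C) (b : pred C) :
  \prod_(c | P c) sg (b c) = (-1) ^+ #|[set c | P c && b c]|.
Proof.
rewrite -prodr_const; rewrite big_mkcond [RHS]big_mkcond /=.
by apply: eq_bigr => c _; rewrite inE /sg; case: (P c); case: (b c).
Qed.

Lemma prod_virt_nonvirt (K : N -> bool) : planar D ->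
  (forall d, K (extf D d) = K d) -> (forall c, veven K c) ->
  \prod_(c | virt c) sg (strand K c) = \prod_(c | ~~ virt c) sg (strand K c).
Proof.
move=> Hp Ke Kv; have := parity Hp Ke Kv.
rewrite !prod_sg -(cardsID [set c | virt c]) => Hev.
have E1 : [set c | strand K c] :&: [set c | virt c] = [set c | virt c && strand K c].
  by apply/setP => c; rewrite !inE andbC.
have E2 : [set c | strand K c] :\: [set c | virt c] = [set c | ~~ virt c && strand K c].
  by apply/setP => c; rewrite !inE andbC.
rewrite E1 E2 in Hev; rewrite -signr_odd -[RHS]signr_odd; congr (_ ^+ _).
by move: Hev; rewrite oddD; case: (odd _); case: (odd _).
Qed.

Lemma Pr_indep (res : C -> bool) tau1 tau2 : planar D ->
  weightb D res tau1 -> weightb D res tau2 -> Pr tau1 = Pr tau2.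
Proof.
move=> Hp /weightP [a1 a2 a3] /weightP [b1 b2 b3].
pose K d := tau1 d (+) tau2 d.
have -> : tau1 = [ffun d => tau2 d (+) K d].
  by apply/ffunP => d; rewrite ffunE /K; case: (tau1 d); case: (tau2 d).
have Ke : forall d, K (extf D d) = K d by move=> d; rewrite /K a1 b1.
have Ki : forall d, K (inner D res d) = K d.
  move=> d; rewrite /K; case: (boolP (at_vertex D res d)) => Hd.
  - by move: (a3 d Hd) (b3 d Hd); case: (tau1 _); case: (tau2 _); case: (tau1 _); case: (tau2 _).
  - by rewrite a2 // b2.
rewrite Pr_xor.
have -> : \prod_(c | virt c) sg (K (c, false, false) (+) K (c, true, false))
        = \prod_(c | virt c) sg (strand K c).
  apply: eq_bigr => c Hc; have [_ [_ H]] := @inner_closed_veven _ D res K c (fun d _ => Ki d); by rewrite H.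
rewrite prod_virt_nonvirt //; last by move=> c; have [] := @inner_closed_veven _ D res K c (fun d _ => Ki d).
rewrite big1 ?mulr1 // => c Hc; have [_ [H _]] := @inner_closed_veven _ D res K c (fun d _ => Ki d).
by case: (strand K c) H => // /(_ isT); rewrite (negbTE Hc).
Qed.

Lemma ipar_Pr (res : C -> bool) tau : planar D -> weightb D res tau -> ipar D res = Pr tau.
Proof.
move=> Hp Ht; rewrite /ipar; case: pickP => [t Ht'|/(_ tau)]; last by rewrite Ht.
exact: Pr_indep Ht' Ht.
Qed.

End Pr.

End P5.
Import P5.

Module P6.
Import Order.TTheory GRing.Theory Num.Theory.

Section Seg.
Variables (C : finType) (D : diagram C) (res : C -> bool) (c0 : C).
Local Notation N := (dart C).
Local Notation inner := (inner D res).
Local Notation rho := (rho D res).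

Definition r0 : rel N := fun d e => ext_rel D d e || ((d.1.1 != c0) && (e == inner d)).

Lemma r0_sym : symmetric r0.
Proof.
move=> d e; rewrite /r0 ext_rel_sym; congr (_ || _).
apply/andP/andP => [[H /eqP ->]|[H /eqP ->]]; rewrite ?(@inner_c _ D res) (@innerK _ D res); split => //.
Qed.

Variable x : N.
Hypothesis xc0 : x.1.1 = c0.

Definition Pm j := (extf D (iter j rho x)).1.1 == c0.
Lemma exPm : exists j, Pm j.
Proof.
exists (order rho x).-1; rewrite /Pm.
have H := iter_order (@rho_inj _ D res) x.
rewrite -(prednK (order_gt0 rho x)) iterS in H.
move: H; rewrite /P5.rho => H.
by rewrite -[extf D _](@innerK _ D res) H (@inner_c _ D res) xc0.
Qed.
Definition mS := ex_minn exPm.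
Lemma mS_spec : Pm mS /\ forall j, Pm j -> mS <= j.
Proof. rewrite /mS; case: ex_minnP => m Hm H; split => //. Qed.

Definition px := extf D (iter mS rho x).
Lemma px_c0 : px.1.1 = c0.
Proof. by have [/eqP ? _] := mS_spec. Qed.

Definition SegS : {set N} :=
  [set y | [exists j : 'I_mS.+1, (y == iter j rho x) || (y == extf D (iter j rho x))]].

Lemma SegP y : reflect (exists2 j, j <= mS & (y = iter j rho x \/ y = extf D (iter j rho x)))
  (y \in SegS).
Proof.
rewrite inE; apply: (iffP existsP) => [[j /orP [/eqP|/eqP] ->]|[j Hj [->|->]]].
- by exists j; [rewrite -ltnS | left].
- by exists j; [rewrite -ltnS | right].
- by exists (Ordinal (n := mS.+1) (m := j) Hj); rewrite eqxx.
- by exists (Ordinal (n := mS.+1) (m := j) Hj); rewrite eqxx orbT.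
Qed.

Lemma Seg_x : x \in SegS.
Proof. by apply/SegP; exists 0 => //; left. Qed.
Lemma Seg_px : px \in SegS.
Proof. by apply/SegP; exists mS => //; right. Qed.

Lemma Seg_ext y : (extf D y \in SegS) = (y \in SegS).
Proof.
have H : forall z, z \in SegS -> extf D z \in SegS.
  move=> z /SegP [j Hj [->|->]]; apply/SegP; exists j => //; [right|left] => //.
  by rewrite extfK.
apply/idP/idP => [/H|/H //]; by rewrite extfK.
Qed.

Lemma Seg_inner y : y.1.1 != c0 -> (inner y \in SegS) = (y \in SegS).
Proof.
have H : forall z, z.1.1 != c0 -> z \in SegS -> inner z \in SegS.
  move=> z Hz /SegP [j Hj [Ez|Ez]]; apply/SegP.
  - case: j Hj Ez => [|j] Hj Ez; first by rewrite Ez /= xc0 eqxx in Hz.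
    exists j; first by lia.
    by right; rewrite Ez iterS (@inner_rho _ D res) (@rho_e_rho _ D res). 
  - have Hjm : j != mS.
      by apply: contraNneq Hz => Ej; rewrite Ez Ej px_c0.
    exists j.+1; first by lia.
    by left; rewrite Ez iterS.
move=> Hy; apply/idP/idP => [|/H]; last exact.
by move/H; rewrite (@innerK _ D res) (@inner_c _ D res); apply.
Qed.

Lemma Seg_c0 y : y \in SegS -> y.1.1 = c0 -> y = x \/ y = px.
Proof.
have [Pm_m Pm_min] := mS_spec.
case/SegP => j Hj [Ey|Ey] Hc.
- case: j Hj Ey => [|j] Hj Ey; first by left.
  have : Pm j by rewrite /Pm -[extf D _](@innerK _ D res) -/(rho _) -iterS -Ey (@inner_c _ D res) Hc.
  by move/Pm_min; lia.
- right; have : Pm j by rewrite /Pm -Ey Hc.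
  move/Pm_min => Hmj; have Ej : j = mS by lia.
  by rewrite Ey Ej.
Qed.

Lemma conn_iter j : j <= mS -> connect r0 x (iter j rho x).
Proof.
have [Pm_m Pm_min] := mS_spec.
elim: j => [|j IH] Hj; first exact: connect0.
apply: connect_trans (IH (ltnW Hj)) _; rewrite iterS.
have Hn : ~~ Pm j by apply/negP => /Pm_min; lia.
apply: (@connect_trans _ _ (extf D (iter j rho x))); apply: connect1.
  by rewrite /r0 ext_relE eqxx.
by rewrite /r0 Hn /= eqxx orbT.
Qed.

Lemma conn_px : connect r0 x px.
Proof.
apply: connect_trans (conn_iter (leqnn _)) _; apply: connect1.
by rewrite /r0 ext_relE eqxx.
Qed.

Lemma Seg_closed y : connect r0 x y -> y \in SegS.
Proof.
apply: (connect_ind_pred (P := fun z => z \in SegS)); first exact: Seg_x.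
move=> z w Hz; rewrite /r0 ext_relE => /orP [/eqP ->|/andP [Hc /eqP ->]].
  by rewrite Seg_ext.
by rewrite Seg_inner.
Qed.

Lemma qq_px (tau : {ffun N -> bool}) : weightb D res tau ->
  tau px (+) px.2 = ~~ (tau x (+) x.2).
Proof.
case/weightP => W1 W2 W3.
have qe : forall d, tau (extf D d) (+) (extf D d).2 = ~~ (tau d (+) d.2).
  by move=> d; rewrite W1 extf_o; case: (tau d); case: d.2.
have qi : forall d, tau (inner d) (+) (inner d).2 = ~~ (tau d (+) d.2).
  move=> d; rewrite (@inner_o _ D res); case: (boolP (at_vertex D res d)) => Hd.
  - by move: (W3 d Hd); case: (tau (inner d)); case: (tau d); case: d.2.
  - by rewrite W2 //; case: (tau d); case: d.2.
have qr : forall d, tau (rho d) (+) (rho d).2 = tau d (+) d.2.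
  by move=> d; rewrite /P5.rho qi qe negbK.
have qit : forall j, tau (iter j rho x) (+) (iter j rho x).2 = tau x (+) x.2.
  by elim=> [|j IH] //; rewrite iterS qr.
by rewrite /px qe qit.
Qed.

Lemma px_neq : planar D -> px != x.
Proof.
move=> _; have [tau Ht] := weight_exists D res.
apply/eqP => E; move: (qq_px Ht); rewrite E.
by case: (tau x (+) x.2).
Qed.

End Seg.

End P6.
Import P6.

Module P7.

Section AddEdge.
Variables (T : finType) (r : rel T) (a b : T).
Hypothesis rs : symmetric r.

Definition addE : rel T := fun x y => [|| r x y, (x == a) && (y == b) | (x == b) && (y == a)].

Let cs : connect_sym r := sym_connect_sym rs.

Lemma connect_sub_addE x y : connect r x y -> connect addE x y.
Proof.
apply: (connect_ind_pred (P := fun z => connect addE x z)) => // z w Hz Hzw.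
by apply: connect_trans Hz (connect1 _); rewrite /addE Hzw.
Qed.

Lemma connect_addE x y : connect addE x y =
  [|| connect r x y, connect r x a && connect r b y | connect r x b && connect r a y].
Proof.
apply/idP/idP.
- apply: (connect_ind_pred (P := fun z => [|| connect r x z, connect r x a && connect r b z
     | connect r x b && connect r a z])); first by rewrite connect0.
  move=> z w Hz; rewrite /addE => /or3P [Hzw|/andP [/eqP Ez /eqP Ew]|/andP [/eqP Ez /eqP Ew]].
  + case/or3P: Hz => [H|/andP [H1 H2]|/andP [H1 H2]].
    * by rewrite (connect_trans H (connect1 Hzw)).
    * by rewrite H1 (connect_trans H2 (connect1 Hzw)) orbT.
    * by rewrite H1 (connect_trans H2 (connect1 Hzw)) !orbT.
  + subst z w; case/or3P: Hz => [H|/andP [H1 H2]|/andP [H1 H2]].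
    * by rewrite H connect0 orbT.
    * by rewrite H1 connect0 orbT.
    * by rewrite H1.
  + subst z w; case/or3P: Hz => [H|/andP [H1 H2]|/andP [H1 H2]].
    * by rewrite H connect0 !orbT.
    * by rewrite H1.
    * by rewrite H1 connect0 !orbT.
- have eab : connect addE a b by apply: connect1; rewrite /addE !eqxx orbT.
  have eba : connect addE b a by apply: connect1; rewrite /addE !eqxx !orbT.
  case/or3P => [/connect_sub_addE //|/andP [H1 H2]|/andP [H1 H2]].
  + exact: connect_trans (connect_trans (connect_sub_addE H1) eab) (connect_sub_addE H2).
  + exact: connect_trans (connect_trans (connect_sub_addE H1) eba) (connect_sub_addE H2).
Qed.

Definition cls (e : rel T) x := [set y | connect e x y].

Lemma cls_eq x y : connect r x y -> cls r x = cls r y.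
Proof.
move=> H; apply/setP => z; rewrite !inE; apply/idP/idP => H'.
  by apply: connect_trans H'; rewrite cs.
exact: connect_trans H H'.
Qed.

Lemma nclasses_addE : (nclasses addE + ~~ connect r a b)%N = nclasses r.
Proof.
pose f (X : {set T}) := if (a \in X) || (b \in X) then cls r a :|: cls r b else X.
have Hf : forall x, cls addE x = f (cls r x).
  move=> x; apply/setP => y; rewrite /f /cls !inE connect_addE.
  case Hxa: (connect r x a) => /=.
    have Hxy : connect r x y = connect r a y.
      apply/idP/idP => H; first by apply: connect_trans H; rewrite cs.
      exact: connect_trans Hxa H.
    rewrite !inE Hxy.
    by case: (connect r a y); case: (connect r b y); case: (connect r x b).
  case Hxb: (connect r x b) => /=.
    have Hxy : connect r x y = connect r b y.
      apply/idP/idP => H; first by apply: connect_trans H; rewrite cs.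
      exact: connect_trans Hxb H.
    by rewrite !inE Hxy; case: (connect r a y); case: (connect r b y).
  by rewrite orbF inE.
have Ecl : [set [set y | connect addE x y] | x : T] = f @: [set [set y | connect r x y] | x : T].
  rewrite -imset_comp; apply: eq_imset => x; exact: Hf.
rewrite /nclasses Ecl.
set S := [set [set y | connect r x y] | x : T].
have clsS : forall x, cls r x \in S by move=> x; apply/imsetP; exists x.
have S_cls : forall X, X \in S -> exists x, X = cls r x by move=> X /imsetP [x _ ->]; exists x.
have fid : connect r a b -> forall X, X \in S -> f X = X.
  move=> Hab X HX; case: (S_cls _ HX) => y ->; rewrite /f !inE.
  case Hya: (connect r y a) => /=.
    by rewrite -(cls_eq Hab) setUid -(cls_eq Hya).
  case Hyb: (connect r y b) => //=.
  by rewrite -(cls_eq Hab) setUid -(cls_eq (connect_trans Hyb _)) // cs.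
case Hab: (connect r a b) => /=.
- rewrite addn0; suff -> : f @: S = S by [].
  apply/setP => X; apply/imsetP/idP => [[Y HY ->]|HX].
    by rewrite fid.
  by exists X; rewrite ?fid.
- have Hneq : cls r a != cls r b.
    apply/negP => /eqP E; have : b \in cls r a by rewrite E inE connect0.
    by rewrite inE Hab.
  have -> : f @: S = f @: (S :\ cls r b).
    apply/setP => X; apply/imsetP/imsetP => [[Y HY ->]|[Y HY ->]].
      case: (eqVneq Y (cls r b)) => [EY|NY]; last by exists Y; rewrite // !inE NY.
      exists (cls r a); first by rewrite !inE Hneq clsS.
      by rewrite /f EY !inE !connect0 orbT.
    by exists Y => //; move: HY; rewrite !inE => /andP [].
  rewrite card_in_imset.
    by rewrite (cardsD1 (cls r b) S) clsS; lia.
  move=> X Y; rewrite !inE => /andP [NX HX] /andP [NY HY].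
  case: (S_cls _ HX) => x EX; case: (S_cls _ HY) => y EY.
  have key : forall z, cls r z != cls r b -> (a \in cls r z) || (b \in cls r z) -> cls r z = cls r a.
    move=> z Nz; rewrite !inE => /orP [H|H]; first by rewrite (cls_eq H).
    by rewrite (cls_eq H) eqxx in Nz.
  rewrite /f; subst X Y.
  case Ex: ((a \in cls r x) || (b \in cls r x)); case Ey: ((a \in cls r y) || (b \in cls r y)).
  + by rewrite (key _ NX Ex) (key _ NY Ey).
  + move=> E; move: Ey; rewrite -E !inE connect0; by case: (connect r y a).
  + move=> E; move: Ex; rewrite E !inE connect0; by case: (connect r x a).
  + by [].
Qed.

End AddEdge.

End P7.
Import P7.

Module P8.
Import Order.TTheory GRing.Theory Num.Theory.

Section Flip.
Variables (C : finType) (D : diagram C) (res : C -> bool) (c0 : C).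
Hypothesis Hv0 : ~~ is_virtual (kind D c0).
Local Notation N := (dart C).
Local Notation res' := (flip_at res c0).
Local Notation virt c := (is_virtual (kind D c)).

Lemma flip_c0 : res' c0 = ~~ res c0.
Proof. by rewrite /flip_at eqxx. Qed.
Lemma flip_ne c : c != c0 -> res' c = res c.
Proof. by rewrite /flip_at => /negbTE ->. Qed.
Lemma inner_flip_ne d : d.1.1 != c0 -> inner D res' d = inner D res d.
Proof. by case: d => [[c s] o] /= Hc; rewrite /Defs.inner flip_ne. Qed.
Lemma at_vertex_flip_ne d : d.1.1 != c0 -> at_vertex D res' d = at_vertex D res d.
Proof. by case: d => [[c s] o] /= Hc; rewrite /Defs.at_vertex /= flip_ne. Qed.

Lemma Pr_xor_c0 (tau : {ffun N -> bool}) (K : N -> bool) : planar D ->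
  (forall d, K (extf D d) = K d) -> (forall d, d.1.1 != c0 -> K (inner D res d) = K d) ->
  veven K c0 -> Pr D [ffun d => tau d (+) K d] = (Pr D tau * sg (strand K c0))%R.
Proof.
move=> Hp Ke Ki Kc0.
have Kloc : forall c, c != c0 -> forall d, d.1.1 = c -> K (inner D res d) = K d.
  by move=> c Hc d Hd; apply: Ki; rewrite Hd.
rewrite Pr_xor; congr (_ * _)%R.
have -> : (\prod_(c | virt c) sg (K (c, false, false) (+) K (c, true, false)) =
          \prod_(c | virt c) sg (strand K c))%R.
  apply: eq_bigr => c Hc.
  have Hc0 : c != c0 by apply: contraNneq Hv0 => <-.
  by have [_ [_ ->]] := @inner_closed_veven _ D res K c (Kloc c Hc0).
rewrite prod_virt_nonvirt //; last first.
  move=> c; case: (eqVneq c c0) => [->|Hc] //.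
  by have [] := @inner_closed_veven _ D res K c (Kloc c Hc).
rewrite (bigD1 c0) //= big1 ?GRing.mulr1 // => c /andP [Hc Hcc].
have [_ [H _]] := @inner_closed_veven _ D res K c (Kloc c Hcc).
by case: (strand K c) H => // /(_ isT); rewrite (negbTE Hc).
Qed.

Lemma weight_flip (tau : {ffun N -> bool}) :
  (forall d, tau (extf D d) = tau d) ->
  (forall d, d.1.1 != c0 -> ~~ at_vertex D res d -> tau (inner D res d) = tau d) ->
  (forall d, d.1.1 != c0 -> at_vertex D res d -> tau (inner D res d) != tau d) ->
  res' c0 = false ->
  tau (c0, false, false) != tau (c0, true, false) ->
  tau (c0, false, true) != tau (c0, true, true) ->
  weightb D res' tau.
Proof.
move=> W1 W2 W3 Hr' E1 E2; apply/weightP; split => // d.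
- case: (eqVneq d.1.1 c0) => Hd.
    by rewrite /Defs.at_vertex Hd Hr' (negbTE Hv0).
  by rewrite at_vertex_flip_ne // inner_flip_ne //; exact: W2.
- case: (eqVneq d.1.1 c0) => Hd.
    move=> _; case: d Hd => [[c s] o] /= ->; rewrite /Defs.inner (negbTE Hv0) Hr' /=.
    by case: s; case: o; rewrite // eq_sym.
  by rewrite at_vertex_flip_ne // inner_flip_ne //; exact: W3.
Qed.

Lemma curve_decomp (rr : C -> bool) (a1 b1 a2 b2 : N) :
  (forall c, c != c0 -> rr c = res c) ->
  (forall s o, [|| ((c0, s, o) == a1) && (inner D rr (c0, s, o) == b1),
       ((c0, s, o) == b1) && (inner D rr (c0, s, o) == a1),
       ((c0, s, o) == a2) && (inner D rr (c0, s, o) == b2) |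
       ((c0, s, o) == b2) && (inner D rr (c0, s, o) == a2)]) ->
  (forall d e, d.1.1 = c0 -> [|| (d == a1) && (e == b1), (d == b1) && (e == a1),
       (d == a2) && (e == b2) | (d == b2) && (e == a2)] -> e = inner D rr d) ->
  a1.1.1 = c0 -> b1.1.1 = c0 -> a2.1.1 = c0 -> b2.1.1 = c0 ->
  curve_rel D rr = addE (addE (r0 D res c0) a1 b1) a2 b2.
Proof.
move=> Hrr H1 H2 ha1 hb1 ha2 hb2.
apply: functional_extensionality => d; apply: functional_extensionality => e.
rewrite /curve_rel /addE /r0 -!orbA.
case: (eqVneq d.1.1 c0) => Hd.
- rewrite /=; congr (_ || _).
  apply/eqP/idP => [->|Hc].
    by case: d Hd => [[c s] o] /= ->; have := H1 s o; rewrite !orbA.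
  by apply: H2 => //; rewrite !orbA.
- have Hin : inner D rr d = inner D res d.
    by case: d Hd => [[c s] o] /= Hc; rewrite /Defs.inner Hrr.
  rewrite /= Hin.
  have nd : forall z, z.1.1 = c0 -> (d == z) = false.
    by move=> z Hz; apply/negbTE; apply: contraNneq Hd => ->; rewrite Hz.
  by rewrite !nd //= !orbF.
Qed.

End Flip.

End P8.
Import P8.

Module P9.
Import Order.TTheory GRing.Theory Num.Theory.

Lemma pair3 (P : bool * bool -> bool * bool) :
  (forall u, P u != u) -> (forall u v, u != v -> (v == P u) = (u == P v)) ->
  [\/ [/\ P (false,false) = (true,true), P (true,false) = (false,true), P (false,true) = (true,false) & P (true,true) = (false,false)],
      [/\ P (false,false) = (true,false), P (true,false) = (false,false), P (false,true) = (true,true) & P (true,true) = (false,true)] |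
      [/\ P (false,false) = (false,true), P (false,true) = (false,false), P (true,false) = (true,true) & P (true,true) = (true,false)]].
Proof.
move=> H1 H2.
have h0 := H1 (false,false).
have h1 := H1 (true,false).
have h2 := H1 (false,true).
have h3 := H1 (true,true).
have h4 := H2 (false,false) (true,false) isT.
have h5 := H2 (false,false) (false,true) isT.
have h6 := H2 (false,false) (true,true) isT.
have h7 := H2 (true,false) (false,false) isT.
have h8 := H2 (true,false) (false,true) isT.
have h9 := H2 (true,false) (true,true) isT.
have h10 := H2 (false,true) (false,false) isT.
have h11 := H2 (false,true) (true,false) isT.
have h12 := H2 (false,true) (true,true) isT.
have h13 := H2 (true,true) (false,false) isT.
have h14 := H2 (true,true) (true,false) isT.
have h15 := H2 (true,true) (false,true) isT.
move: h0 h1 h2 h3 h4 h5 h6 h7 h8 h9 h10 h11 h12 h13 h14 h15.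
case: (P (false,false)) => [[] []]; case: (P (true,false)) => [[] []]; case: (P (false,true)) => [[] []]; case: (P (true,true)) => [[] []] => //=.
all: try by move=> *; constructor 1.
all: try by move=> *; constructor 2.
all: try by move=> *; constructor 3.
Qed.

Section Core.
Variables (C : finType) (D : diagram C) (res : C -> bool) (c0 : C).
Hypotheses (Hp : planar D) (Hv0 : ~~ is_virtual (kind D c0)) (Hr0 : res c0 = true).
Local Notation N := (dart C).
Local Notation res' := (flip_at res c0).
Local Notation r0 := (r0 D res c0).
Local Notation conn0 := (connect r0).
Local Notation I1 := (c0, false, false).
Local Notation I2 := (c0, true, false).
Local Notation O1 := (c0, false, true).
Local Notation O2 := (c0, true, true).

Lemma inner_S s o : inner D res (c0, s, o) = (c0, ~~ s, ~~ o).
Proof. by rewrite /Defs.inner (negbTE Hv0) Hr0. Qed.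
Lemma inner_S' s o : inner D res' (c0, s, o) = (c0, ~~ s, o).
Proof. by rewrite /Defs.inner (negbTE Hv0) flip_c0 Hr0. Qed.

Lemma curve_S : curve_rel D res = addE (addE r0 I1 O2) I2 O1.
Proof.
apply: curve_decomp => //.
- by move=> s o; rewrite inner_S; case: s; case: o; rewrite !eqxx ?orbT.
- move=> [[c s] o] e Hc; simpl in Hc; subst c; rewrite inner_S.
  by case: s; case: o; rewrite !xpair_eqE !eqxx /= ?orbF => /eqP ->.
Qed.

Lemma curve_S' : curve_rel D res' = addE (addE r0 I1 I2) O1 O2.
Proof.
apply: curve_decomp => //.
- by move=> c Hc; rewrite flip_ne.
- by move=> s o; rewrite inner_S'; case: s; case: o; rewrite !eqxx ?orbT.
- move=> [[c s] o] e Hc; simpl in Hc; subst c; rewrite inner_S'.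
  by case: s; case: o; rewrite !xpair_eqE !eqxx /= ?orbF => /eqP ->.
Qed.

Lemma r0s : symmetric r0.
Proof. exact: r0_sym. Qed.

Lemma addE_sym (r : rel N) a b : symmetric r -> symmetric (addE r a b).
Proof.
move=> rs x y; rewrite /addE rs; congr (_ || _).
by rewrite orbC; congr (_ || _); rewrite andbC.
Qed.

Lemma nS_formula (rr : C -> bool) a1 b1 a2 b2 :
  curve_rel D rr = addE (addE r0 a1 b1) a2 b2 ->
  (nS D rr + ~~ connect (addE r0 a1 b1) a2 b2 + ~~ conn0 a1 b1 = ncirc D + nclasses r0)%N.
Proof.
move=> E; rewrite /nS E; have h1 := nclasses_addE a2 b2 (addE_sym a1 b1 r0s).
have h2 := nclasses_addE a1 b1 r0s; lia.
Qed.

Lemma conn0_c0 x (hx : x.1.1 = c0) y : y.1.1 = c0 ->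
  conn0 x y = (y == x) || (y == px D res hx).
Proof.
move=> hy; apply/idP/idP => [H|/orP [/eqP ->|/eqP ->]].
- by case: (Seg_c0 (Seg_closed hx H) hy) => ->; rewrite eqxx ?orbT.
- exact: connect0.
- exact: conn_px.
Qed.

Definition Pf (u : bool * bool) : bool * bool :=
  let d := px D res (x := (c0, u.1, u.2)) erefl in (d.1.2, d.2).

Lemma px_eq s o : px D res (x := (c0, s, o)) erefl = (c0, (Pf (s, o)).1, (Pf (s, o)).2).
Proof.
rewrite /Pf /=; have := px_c0 D res (x := (c0, s, o)) erefl.
by case: (px D res _) => [[c s'] o'] /= ->.
Qed.

Lemma conn0_tab u v : conn0 (c0, u.1, u.2) (c0, v.1, v.2) = (v == u) || (v == Pf u).
Proof.
rewrite (conn0_c0 (x := (c0, u.1, u.2)) erefl) // px_eq.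
case: u v => [s o] [s' o'] /=.
by rewrite !xpair_eqE !eqxx.
Qed.

Lemma Pf_cases :
  [\/ [/\ Pf (false,false) = (true,true), Pf (true,false) = (false,true), Pf (false,true) = (true,false) & Pf (true,true) = (false,false)],
      [/\ Pf (false,false) = (true,false), Pf (true,false) = (false,false), Pf (false,true) = (true,true) & Pf (true,true) = (false,true)] |
      [/\ Pf (false,false) = (false,true), Pf (false,true) = (false,false), Pf (true,false) = (true,true) & Pf (true,true) = (true,false)]].
Proof.
apply: pair3.
- move=> [s o]; have := px_neq res (x := (c0, s, o)) erefl Hp.
  by rewrite px_eq; case: (Pf (s, o)) => a b; rewrite !xpair_eqE eqxx.
- move=> u v Huv; have h1 := conn0_tab u v; have h2 := conn0_tab v u.
  rewrite (sym_connect_sym r0s) h1 in h2.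
  by move: h2; rewrite [v == u]eq_sym (negbTE Huv).
Qed.

Lemma conn0_tab' a b c d : conn0 (c0, a, b) (c0, c, d) = ((c, d) == (a, b)) || ((c, d) == Pf (a, b)).
Proof. exact: (conn0_tab (a, b) (c, d)). Qed.

Lemma Seg_at_c0 x (hx : x.1.1 = c0) y : y.1.1 = c0 ->
  (y \in SegS D res hx) = (y == x) || (y == px D res hx).
Proof.
move=> hy; apply/idP/idP => [H|/orP [/eqP ->|/eqP ->]].
- by case: (Seg_c0 H hy) => ->; rewrite eqxx ?orbT.
- exact: Seg_x.
- exact: Seg_px.
Qed.

Lemma Seg_tab a b c d : ((c0, c, d) \in SegS D res (x := (c0, a, b)) erefl) =
  ((c, d) == (a, b)) || ((c, d) == Pf (a, b)).
Proof.
rewrite Seg_at_c0 // px_eq; case: (Pf (a, b)) => a' b'.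
by rewrite !xpair_eqE eqxx.
Qed.

Lemma weight_same (tau : {ffun N -> bool}) : weightb D res tau ->
  tau I1 != tau I2 -> tau O1 != tau O2 -> weightb D res' tau.
Proof.
case/weightP => W1 W2 W3 H1 H2; apply: (weight_flip Hv0) => //.
- by move=> d _; exact: W2.
- by move=> d _; exact: W3.
- by rewrite flip_c0 Hr0.
Qed.

Lemma weight_K (tau : {ffun N -> bool}) a b : weightb D res tau ->
  let K := fun d => d \in SegS D res (x := (c0, a, b)) erefl in
  let tau' := [ffun d => tau d (+) K d] in
  tau' I1 != tau' I2 -> tau' O1 != tau' O2 -> weightb D res' tau'.
Proof.
case/weightP => W1 W2 W3 K tau' H1 H2; apply: (weight_flip Hv0) => //.
- by move=> d; rewrite !ffunE W1 /K Seg_ext.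
- by move=> d Hd Hv; rewrite !ffunE W2 // /K Seg_inner.
- by move=> d Hd Hv; rewrite !ffunE /K Seg_inner //; move: (W3 d Hv);
    case: (tau _); case: (tau _); case: (_ \in _).
- by rewrite flip_c0 Hr0.
Qed.

Lemma Pr_K (tau : {ffun N -> bool}) a b :
  let K := fun d => d \in SegS D res (x := (c0, a, b)) erefl in
  P4.veven K c0 ->
  Pr D [ffun d => tau d (+) K d] = (Pr D tau * sg (P4.strand K c0))%R.
Proof.
move=> K Kv; apply: (@Pr_xor_c0 _ D res c0 Hv0) => //.
- by move=> d; rewrite /K Seg_ext.
- by move=> d Hd; rewrite /K Seg_inner.
Qed.

Lemma core :
  (nS D res' = nS D res /\ ipar D res' = (- ipar D res)%R) \/
  ((nS D res' = (nS D res).+1 \/ (nS D res').+1 = nS D res) /\ ipar D res' = ipar D res).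
Proof.
have [tau Ht] := weight_exists D res.
have Ht' := Ht; case/weightP: Ht' => W1 W2 W3.
have tO2 : tau O2 = tau I1 by rewrite -(W2 I1) ?inner_S // /Defs.at_vertex /= Hr0 andbF.
have tO1 : tau O1 = tau I2 by rewrite -(W2 I2) ?inner_S // /Defs.at_vertex /= Hr0 andbF.
have E1 := nS_formula curve_S; have E2 := nS_formula curve_S'.
rewrite !connect_addE !conn0_tab' in E1 E2.
have q := fun s o => qq_px (x := (c0, s, o)) erefl Ht.
have ipS := ipar_Pr Hp Ht.
case: Pf_cases => [[e1 e2 e3 e4]|[e1 e2 e3 e4]|[e1 e2 e3 e4]];
  rewrite ?e1 ?e2 ?e3 ?e4 /= in E1 E2.
- (* oriented pairing: S has two curves at c0 *)
  right; split; first by right; lia.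
  case: (eqVneq (tau I1) (tau I2)) => Hab.
  + pose K := fun d => d \in SegS D res (x := (c0, true, false)) erefl.
    have Ht2 : weightb D res' [ffun d => tau d (+) K d].
      apply: weight_K => //; rewrite !ffunE /K !Seg_tab e2 /=.
      * by rewrite Hab; case: (tau I2).
      * by rewrite tO1 tO2 Hab; case: (tau I2).
    rewrite (ipar_Pr Hp Ht2) ipS Pr_K.
      by rewrite /P4.strand /K !Seg_tab e2 /= GRing.mulr1.
    by rewrite /P4.veven /K !Seg_tab e2.
  + have Ht2 : weightb D res' tau.
      by apply: weight_same => //; rewrite tO1 tO2 eq_sym.
    by rewrite (ipar_Pr Hp Ht2) ipS.
- (* disoriented pairing *)
  right; split; first by left; lia.
  have h := q false true; rewrite px_eq e3 /= tO1 tO2 in h.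
  have Ht2 : weightb D res' tau.
    apply: weight_same => //; rewrite ?tO1 ?tO2;
      by move: h; case: (tau I1); case: (tau I2).
  by rewrite (ipar_Pr Hp Ht2) ipS.
- (* straight pairing *)
  left; split; first lia.
  have h := q false false; rewrite px_eq e1 /= tO1 in h.
  pose K := fun d => d \in SegS D res (x := (c0, false, false)) erefl.
  have Ht2 : weightb D res' [ffun d => tau d (+) K d].
    apply: weight_K => //; rewrite !ffunE /K !Seg_tab e1 /= ?tO1 ?tO2;
      by move: h; case: (tau I1); case: (tau I2).
  rewrite (ipar_Pr Hp Ht2) ipS Pr_K.
    by rewrite /P4.strand /K !Seg_tab e1 /= GRing.mulrN1.
  by rewrite /P4.veven /K !Seg_tab e1.
Qed.

End Core.

End P9.
Import P9.

Module P10.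
Import Order.TTheory GRing.Theory Num.Theory.

Section MaxA.
Variables (C : finType) (D : diagram C) (res : C -> bool) (c0 : C).
Hypotheses (Hv0 : ~~ is_virtual (kind D c0)) (Hr0 : res c0 = true).
Local Notation res' := (flip_at res c0).

Lemma card_flip_t (P : pred C) :
  #|[set c | P c && res c]| = (#|[set c | P c && res' c]| + P c0)%N.
Proof.
rewrite (cardsD1 c0 [set c | P c && res c]) inE Hr0 andbT addnC; congr (_ + _)%N.
apply: eq_card => c; rewrite !inE; case: (eqVneq c c0) => [->|Hc] /=.
  by rewrite flip_c0 Hr0 andbF.
by rewrite flip_ne.
Qed.

Lemma card_flip_f (P : pred C) :
  #|[set c | P c && ~~ res' c]| = (#|[set c | P c && ~~ res c]| + P c0)%N.
Proof.
rewrite (cardsD1 c0 [set c | P c && ~~ res' c]) inE flip_c0 Hr0 andbT addnC; congr (_ + _)%N.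
apply: eq_card => c; rewrite !inE; case: (eqVneq c c0) => [->|Hc] /=.
  by rewrite Hr0 andbF.
by rewrite flip_ne.
Qed.

Local Open Scope ring_scope.

Lemma maxA_flip : exists2 e : int, (e == 1) || (e == -1) &
  Defs.maxA D res' = Defs.maxA D res + 2 * e + 2 * ((nS D res')%:Z - (nS D res)%:Z).
Proof.
rewrite /Defs.maxA /a_S /b_S /alpha_S /beta_S.
rewrite (card_flip_t (fun c => is_neg (kind D c))) (card_flip_t (fun c => is_pos (kind D c))).
rewrite (card_flip_f (fun c => is_neg (kind D c))) (card_flip_f (fun c => is_pos (kind D c))).
rewrite (card_flip_t (fun c => is_singular (kind D c))) (card_flip_f (fun c => is_singular (kind D c))).
move: Hv0; case: (kind D c0) => [[]||] //= _.
- exists (-1) => //; lia.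
- exists 1 => //; lia.
- exists 1 => //; lia.
Qed.

End MaxA.

End P10.
Import P10.

Module P11.
Import GRing.Theory.

Section Final.
Variables (C : finType) (D : diagram C).
Local Open Scope ring_scope.

Definition Rel (A B : C -> bool) : Prop :=
  (nS D A = nS D B /\ ipar D A = - ipar D B /\ (4 %| Defs.maxA D A - Defs.maxA D B - 2)%Z) \/
  (nS D A <> nS D B /\ ipar D A = ipar D B /\ (4 %| Defs.maxA D A - Defs.maxA D B)%Z).

Lemma Rel_sym A B : Rel A B -> Rel B A.
Proof.
case=> [[h1 [h2 h3]]|[h1 [h2 h3]]]; [left|right]; split => //.
- split; first by rewrite h2 opprK.
  case/dvdzP: h3 => q hq; apply/dvdzP; exists (- q - 1); lia.
- by move=> E; apply: h1.
- split => //.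
  case/dvdzP: h3 => q hq; apply/dvdzP; exists (- q); lia.
Qed.

Lemma Rel_true (res : C -> bool) (c0 : C) : planar D -> ~~ is_virtual (kind D c0) ->
  res c0 = true -> Rel (flip_at res c0) res.
Proof.
move=> Hp Hv Hr.
have [e He Em] := maxA_flip Hv Hr.
case: (core Hp Hv Hr) => [[hn hi]|[hn hi]]; [left|right].
- split => //; split => //; rewrite Em hn.
  move: He => /orP [/eqP ->|/eqP ->].
  + apply/dvdzP; exists 0; lia.
  + apply/dvdzP; exists (-1); lia.
- split; first by case: hn => h; lia.
  split => //; rewrite Em.
  move: He => /orP [/eqP ->|/eqP ->]; case: hn => h.
  + apply/dvdzP; exists 1; lia.
  + apply/dvdzP; exists 0; lia.
  + apply/dvdzP; exists 0; lia.
  + apply/dvdzP; exists (-1); lia.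
Qed.

Lemma Rel_flip (res : C -> bool) (c0 : C) : planar D -> ~~ is_virtual (kind D c0) ->
  Rel (flip_at res c0) res.
Proof.
move=> Hp Hv; case Hr: (res c0); first exact: Rel_true.
set res1 := flip_at res c0.
have H1 : res1 c0 = true by rewrite /res1 /flip_at eqxx Hr.
have E : flip_at res1 c0 = res.
  apply: functional_extensionality => c; rewrite /res1 /flip_at.
  by case: (c == c0); rewrite ?negbK.
have := Rel_true Hp Hv H1; rewrite E => HR; exact: Rel_sym HR.
Qed.

End Final.


End P11.
Import P11.

Theorem lemma4p3 (C : finType) (D : diagram C) (res : C -> bool) (c0 : C) :
  planar D -> ~~ is_virtual (kind D c0) ->
  (nS D (flip_at res c0) <> nS D res ->
     ipar D (flip_at res c0) = ipar D res /\
     (maxA D (flip_at res c0) = maxA D res %[mod 4])%Z) /\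
  (nS D (flip_at res c0) = nS D res ->
     ipar D (flip_at res c0) = (- ipar D res)%R /\
     (maxA D (flip_at res c0) = maxA D res + 2 %[mod 4])%Z).
Proof.
move=> Hp Hv; case: (Rel_flip res Hp Hv) => [[h1 [h2 h3]]|[h1 [h2 h3]]]; split => // H.
- split => //; apply/eqP; rewrite eqz_mod_dvd.
  case/dvdzP: h3 => q hq; apply/dvdzP; exists q; lia.
- split => //; apply/eqP; by rewrite eqz_mod_dvd.
Qed.
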